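(* Let $R$ be a finite ring with unity having $n$ elements. If there exist elements $x_1,\ldots,x_m\in R$ such that $x_i-x_j$ is a unit of $R$ for all distinct $i,j$, then there exist $n\times n$ monomial $(0,1)$-matrices $K_{i,j}$, $i,j\in\{1,\ldots,m\}$, such that $\sum_{l=1}^mK_{i,l}K_{j,l}^\top$ is a $(0,1)$-matrix for all distinct $i,j\in\{1,\ldots,m\}$.
   Context: A monomial $(0,1)$-matrix is a permutation matrix (exactly one entry $1$ in each row and each column, all other entries $0$). *)

(* Defs.v *)
From HB Require Import structures.
From mathcomp Require Import all_boot all_order all_algebra all_fingroup.
Set Implicit Arguments. Unset Strict Implicit. Unset Printing Implicit Defensive.
Import GRing.Theory.
Local Open Scope ring_scope.

Definition is01_mx (n : nat) (A : 'M[int]_n) : Prop :=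
  forall a b : 'I_n, A a b = 0 \/ A a b = 1.

(* Main.v *)
Require Import Defs.
From HB Require Import structures.
From mathcomp Require Import all_boot all_order all_algebra all_fingroup.
Local Open Scope ring_scope.
Import GRing.Theory.

Section Aux.
Variable R : finUnitRingType.

Definition shiftf (c : R) (k : 'I_#|R|) : 'I_#|R| := enum_rank (enum_val k + c).

Lemma shiftf_inj c : injective (shiftf c).
Proof.
move=> a b /enum_rank_inj /addIr /enum_val_inj //.
Qed.

Definition shiftp c : {perm 'I_#|R|} := perm (@shiftf_inj c).

End Aux.

Lemma prod_entry (n : nat) (s t : {perm 'I_n}) a b :
  ((perm_mx s : 'M[int]_n) *m (perm_mx t)^T) a b = (s a == t b)%:R.
Proof.
rewrite !mxE (bigD1 (s a)) //= big1 ?addr0.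
  by rewrite /perm_mx !mxE eqxx mul1r eq_sym.
by move=> c /negbTE Hc; rewrite /perm_mx !mxE eq_sym Hc mul0r.
Qed.

Lemma addsub (R : zmodType) (a b c : R) : (a + b) - (a + c) = b - c.
Proof. by rewrite opprD addrACA subrr add0r. Qed.

Theorem lemma4p1 (R : finUnitRingType) (m : nat) :
  (exists x : 'I_m -> R, forall i j : 'I_m, i != j -> (x i - x j) \is a GRing.unit) ->
  exists K : 'I_m -> 'I_m -> 'M[int]_#|R|,
    (forall i l : 'I_m, is_perm_mx (K i l)) /\
    (forall i j : 'I_m, i != j -> is01_mx (\sum_(l < m) K i l *m (K j l)^T)).
Proof.
case=> x Hx.
exists (fun i l => perm_mx (@shiftp R (x i * x l))); split.
  by move=> i l; exact: perm_mx_is_perm.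
move=> i j Hij a b; rewrite summxE.
under eq_bigr => l _ do rewrite prod_entry.
have Hun : forall l l', @shiftp R (x i * x l) a == @shiftp R (x j * x l) b ->
    @shiftp R (x i * x l') a == @shiftp R (x j * x l') b -> l = l'.
  move=> l l'; rewrite !permE /shiftf => /eqP/enum_rank_inj E1 /eqP/enum_rank_inj E2.
  apply/eqP; apply: contraT => Hll.
  have H0 : (x i - x j) * (x l - x l') = 0.
    have E3 : x i * x l - x i * x l' = x j * x l - x j * x l'.
      by rewrite -(@addsub R (enum_val a)) E1 E2 addsub.
    by rewrite mulrBl !mulrBr E3 subrr.
  move/eqP: H0; rewrite -(mulr0 (x i - x j)) => /eqP/(mulrI (Hx _ _ Hij))/eqP.
  by rewrite subr_eq0 => /eqP Exl; move: (Hx _ _ Hll); rewrite Exl subrr unitr0.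
case: (pickP (fun l : 'I_m => @shiftp R (x i * x l) a == @shiftp R (x j * x l) b)) => [l0 Hl0|Hn].
  right; rewrite (bigD1 l0) //= Hl0 big1 ?addr0 //.
  move=> l Hl; case E: (_ == _) => //; by move: Hl; rewrite (Hun _ _ E Hl0) eqxx.
left; rewrite big1 // => l _; by rewrite Hn.
Qed.
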